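(* Let $T_n$ denote the Chebyshev polynomial of degree $n$. For any $0\le\delta<1$ and any sequence $\boldsymbol\lambda=(\lambda_1,\dots,\lambda_d)$ of reals with $-1\le\lambda_i\le1+\delta$, we have $$\gamma_2(\mathcal D_{T_n,\boldsymbol\lambda})\le(2n^2-1)\,T_n(1+\delta)\qquad\text{for all }n\ge1.$$
   Context: The Chebyshev polynomial $T_n$ is defined by $T_n(\cos\theta)=\cos(n\theta)$. For a continuously differentiable $f$ and a sequence $\boldsymbol\lambda=(\lambda_1,\dots,\lambda_d)$, $\mathcal D_{f,\boldsymbol\lambda}$ is the $d\times d$ matrix with entries $(\mathcal D_{f,\boldsymbol\lambda})_{ij}=\frac{f(\lambda_i)-f(\lambda_j)}{\lambda_i-\lambda_j}$ if $\lambda_i\ne\lambda_j$ and $f'(\lambda_i)$ if $\lambda_i=\lambda_j$. For a $d\times d$ matrix $\mathbf M$, $\gamma_2(\mathbf M)=\inf\max\big(\{\|v_i\|^2:1\le i\le d\}\cup\{\|w_j\|^2:1\le j\le d\}\big)$, the infimum over all families of vectors $v_i,w_j$ (in any Hilbert space) with $\mathbf M_{ij}=\langle v_i|w_j\rangle$ for all $i,j$. *)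

(* Defs.v *)
From mathcomp Require Import all_boot all_order all_algebra.
From mathcomp Require Import all_classical all_reals.
From mathcomp Require Import trigo.
Set Implicit Arguments. Unset Strict Implicit. Unset Printing Implicit Defensive.
Import Order.TTheory GRing.Theory Num.Theory.
Local Open Scope ring_scope.
Local Open Scope classical_set_scope.

Definition divdiff (R : realType) (f : {poly R}) (d : nat) (lam : 'I_d -> R)
  : 'M[R]_d :=
  \matrix_(i, j) (if lam i != lam j then (f.[lam i] - f.[lam j]) / (lam i - lam j)
                  else f^`().[lam i]).

Definition sqnorm (R : realType) (k : nat) (v : 'rV[R]_k) : R := \sum_(l < k) v 0 l ^+ 2.

Definition gamma2 (R : realType) (d : nat) (M : 'M[R]_d) : R :=
  inf [set c : R | exists (k : nat) (v w : 'I_d -> 'rV[R]_k),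
        (forall i j, M i j = \sum_(l < k) v i 0 l * w j 0 l) /\
        c = Num.max (\big[Num.max/0]_(i < d) sqnorm (v i))
                    (\big[Num.max/0]_(j < d) sqnorm (w j))].

(* Main.v *)
Require Import Defs.
From mathcomp Require Import all_boot all_order all_algebra.
From mathcomp Require Import all_classical all_reals.
From mathcomp Require Import trigo.
From mathcomp Require Import ring lra zify.
From Stdlib Require Import Lia.
Import Order.TTheory GRing.Theory Num.Theory.
Local Open Scope ring_scope.

Section Cheb.
Variable R : realType.

Fixpoint chebp (p0 p1 : {poly R}) (k : nat) : {poly R} :=
  match k with
  | 0 => p0
  | k1.+1 => match k1 with
             | 0 => p1
             | k2.+1 => 'X *+ 2 * chebp p0 p1 k1 - chebp p0 p1 k2
             end
  end.

Definition Tp k := chebp 1 'X k.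
Definition Up k := chebp 1 ('X *+ 2) k.

Lemma chebE p0 p1 k x :
  (chebp p0 p1 k.+2).[x] = 2 * x * (chebp p0 p1 k.+1).[x] - (chebp p0 p1 k).[x].
Proof. by rewrite [chebp _ _ k.+2]/= !hornerE; ring. Qed.

Lemma T0 x : (Tp 0%N).[x] = 1. Proof. by rewrite /Tp /= hornerE. Qed.
Lemma T1 x : (Tp 1%N).[x] = x. Proof. by rewrite /Tp /= hornerE. Qed.
Lemma U0 x : (Up 0%N).[x] = 1. Proof. by rewrite /Up /= hornerE. Qed.
Lemma U1 x : (Up 1%N).[x] = 2 * x. Proof. by rewrite /Up /= !hornerE; ring. Qed.
Lemma TE k x : (Tp k.+2).[x] = 2 * x * (Tp k.+1).[x] - (Tp k).[x].
Proof. exact: chebE. Qed.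
Lemma UE k x : (Up k.+2).[x] = 2 * x * (Up k.+1).[x] - (Up k).[x].
Proof. exact: chebE. Qed.

Lemma cosT k (t : R) : (Tp k).[cos t] = cos (k%:R * t).
Proof.
suff: (Tp k).[cos t] = cos (k%:R * t) /\ (Tp k.+1).[cos t] = cos (k.+1%:R * t) by case.
elim: k => [|k [IH1 IH2]].
  by rewrite T0 T1 mul0r cos0 mul1r.
split=> //.
rewrite TE IH1 IH2.
have -> : k.+2%:R * t = k.+1%:R * t + t by rewrite !mulrSr; ring.
have -> : k%:R * t = k.+1%:R * t - t by rewrite !mulrSr; ring.
rewrite cosB cosD; ring.
Qed.

Lemma poly_eq_on (p q : {poly R}) :
  (forall x : R, -1 <= x <= 1 -> p.[x] = q.[x]) -> p = q.
Proof.
move=> H; apply/eqP; rewrite -subr_eq0; apply/negPn/negP => nz.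
set rs := [seq (i.+1%:R)^-1 : R | i <- iota 0 (size (p - q))].
have H1 : all (root (p - q)) rs.
  apply/allP => y /mapP [i _ ->]; rewrite /root !hornerE H ?subrr //.
  apply/andP; split.
    apply: (le_trans (y := 0)); first by rewrite lerN10.
    by rewrite invr_ge0 ler0n.
  by rewrite invf_le1 ?ltr0Sn // ler1n.
have H2 : uniq rs.
  rewrite map_inj_uniq ?iota_uniq // => i j /invr_inj /eqP.
  by rewrite eqr_nat => /eqP [].
have := max_poly_roots nz H1 H2.
by rewrite size_map size_iota ltnn.
Qed.

Lemma mono_gen (a b : nat -> R) (x y : R) :
  1 <= x -> x <= y ->
  (forall k, a k.+2 = 2 * x * a k.+1 - a k) ->
  (forall k, b k.+2 = 2 * y * b k.+1 - b k) ->
  1 <= a 0%N -> a 0%N <= a 1%N -> a 0%N <= b 0%N -> a 1%N <= b 1%N ->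
  a 1%N - a 0%N <= b 1%N - b 0%N ->
  forall k, [/\ 1 <= a k, a k <= a k.+1, a k <= b k, a k.+1 <= b k.+1
             & a k.+1 - a k <= b k.+1 - b k].
Proof.
move=> x1 xy ha hb h0 h1 h2 h3 h4; elim=> [|k [i1 i2 i3 i4 i5]]; first by split.
have e1 : a k.+2 - a k.+1 = (2 * x - 2) * a k.+1 + (a k.+1 - a k) by rewrite ha; ring.
have e2 : b k.+2 - b k.+1 = (2 * y - 2) * b k.+1 + (b k.+1 - b k) by rewrite hb; ring.
have p1 : 0 <= (2 * x - 2) * a k.+1 by apply: mulr_ge0; lra.
have p2 : (2 * x - 2) * a k.+1 <= (2 * y - 2) * b k.+1.
  apply: ler_pM; lra.
split; lra.
Qed.

Lemma T_mono k x y : 1 <= x -> x <= y ->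
  1 <= (Tp k).[x] /\ (Tp k).[x] <= (Tp k.+1).[x] /\ (Tp k).[x] <= (Tp k).[y].
Proof.
move=> x1 xy.
have := @mono_gen (fun k => (Tp k).[x]) (fun k => (Tp k).[y]) x y x1 xy
  (fun k => TE k x) (fun k => TE k y).
rewrite /= ?T0 ?T1 => /(_ (lexx _)) /(_ x1) /(_ (lexx _)) /(_ xy).
have h : x - 1 <= y - 1 by lra.
by move=> /(_ h k) [].
Qed.

Lemma U_mono k x y : 1 <= x -> x <= y ->
  1 <= (Up k).[x] /\ (Up k).[x] <= (Up k).[y].
Proof.
move=> x1 xy.
have := @mono_gen (fun k => (Up k).[x]) (fun k => (Up k).[y]) x y x1 xy
  (fun k => UE k x) (fun k => UE k y).
rewrite /= ?U0 ?U1 => /(_ (lexx _)).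
have h1 : 1 <= 2 * x by lra.
have h2 : 2 * x <= 2 * y by lra.
have h3 : 2 * x - 1 <= 2 * y - 1 by lra.
by move=> /(_ h1 (lexx _) h2 h3 k) [].
Qed.

Lemma UT k x : (Up k.+2).[x] = (Up k).[x] + 2 * (Tp k.+2).[x].
Proof.
suff: (Up k.+2).[x] = (Up k).[x] + 2 * (Tp k.+2).[x] /\
      (Up k.+3).[x] = (Up k.+1).[x] + 2 * (Tp k.+3).[x] by case.
elim: k => [|k [IH1 IH2]].
  rewrite !UE !TE ?U0 ?U1 ?T0 ?T1; split; ring.
split=> //.
have e := UE k x; rewrite UE IH2 [(Tp k.+4).[x]]TE; lra.
Qed.

Lemma T_le1 k x : -1 <= x <= 1 -> `|(Tp k).[x]| <= 1.
Proof.
move=> hx; have [_ <-] := acos_def hx.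
by rewrite cosT cos_max.
Qed.

Lemma T_bound k x X : 1 <= X -> -1 <= x <= X -> `|(Tp k).[x]| <= (Tp k).[X].
Proof.
move=> X1 /andP [xl xu].
have [x1|x1] := leP x 1.
  have hx : -1 <= x <= 1 by rewrite xl x1.
  have := T_le1 k x hx.
  have [h _] := T_mono k X X X1 (lexx X); lra.
have [h1 [_ h2]] := T_mono k x X (ltW x1) xu.
rewrite ger0_norm //; lra.
Qed.

Lemma U_bound k x X : 1 <= X -> -1 <= x <= X -> `|(Up k).[x]| <= (Up k).[X].
Proof.
move=> X1 /andP [xl xu].
suff: `|(Up k).[x]| <= (Up k).[X] /\ `|(Up k.+1).[x]| <= (Up k.+1).[X] by case.
elim: k => [|k [IH1 IH2]].
  rewrite ?U0 ?U1 normr1 lexx; split=> //.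
  rewrite normrM ger0_norm //; apply: ler_wpM2l => //.
  rewrite ler_norml; apply/andP; split; lra.
split=> //.
rewrite !UT; apply: (le_trans (ler_normD _ _)); apply: lerD => //.
rewrite normrM ger0_norm //; apply: ler_wpM2l => //.
apply: T_bound => //; lra.
Qed.

Definition cc (k : nat) : R := if k == 0%N then 1 else 2.

Definition S n x y := \sum_(k < n) cc k * (Up (n.-1 - k)).[x] * (Tp k).[y].

Lemma S0 x y : S 0 x y = 0.
Proof. by rewrite /S big_ord0. Qed.

Lemma S1 x y : S 1 x y = 1.
Proof. by rewrite /S big_ord_recr big_ord0 /= add0r U0 T0 /cc /= !mulr1. Qed.

Lemma S_rec n x y :
  S n.+2 x y = 2 * x * S n.+1 x y - S n x y + 2 * (Tp n.+1).[y].
Proof.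
rewrite /S big_ord_recr big_ord_recr [in X in _ = X - _ + _]big_ord_recr /=.
have A : \sum_(k < n) cc (widen_ord (leqnSn n.+1) (widen_ord (leqnSn n) k)) *
    (Up (n.+1 - widen_ord (leqnSn n.+1) (widen_ord (leqnSn n) k))).[x] *
    (Tp (widen_ord (leqnSn n.+1) (widen_ord (leqnSn n) k))).[y] =
  2 * x * (\sum_(k < n) cc (widen_ord (leqnSn n) k) *
    (Up (n - widen_ord (leqnSn n) k)).[x] * (Tp (widen_ord (leqnSn n) k)).[y])
  - \sum_(k < n) cc k * (Up (n.-1 - k)).[x] * (Tp k).[y].
  rewrite mulr_sumr -sumrB; apply: eq_bigr => k _ /=.
  have hk := ltn_ord k.
  have e1 : (n.+1 - k = (n.-1 - k).+2)%N by lia.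
  have e2 : (n - k = (n.-1 - k).+1)%N by lia.
  rewrite e1 e2 UE; ring.
rewrite A subSnn !subnn U1 U0 /cc /=; ring.
Qed.

Lemma S_diff n x y : (x - y) * S n x y = (Tp n).[x] - (Tp n).[y].
Proof.
suff: (x - y) * S n x y = (Tp n).[x] - (Tp n).[y] /\
      (x - y) * S n.+1 x y = (Tp n.+1).[x] - (Tp n.+1).[y] by case.
elim: n => [|n [IH1 IH2]].
  by rewrite S0 S1 ?T0 ?T1; split; ring.
split=> //.
have h1 : (Tp n.+1).[x] = (Tp n.+1).[y] + (x - y) * S n.+1 x y by rewrite IH2; ring.
have h0 : (Tp n).[x] = (Tp n).[y] + (x - y) * S n x y by rewrite IH1; ring.
rewrite S_rec !TE h1 h0; ring.
Qed.

Lemma S_deriv n x : ((Tp n)^`()).[x] = S n x x.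
Proof.
suff: ((Tp n)^`()).[x] = S n x x /\ ((Tp n.+1)^`()).[x] = S n.+1 x x by case.
elim: n => [|n [IH1 IH2]].
  by rewrite S0 S1 /Tp /= derivX derivC !hornerE.
split=> //.
have -> : Tp n.+2 = 'X *+ 2 * Tp n.+1 - Tp n by [].
rewrite derivB derivM derivMn derivX !hornerE IH1 IH2 S_rec; ring.
Qed.

Lemma S_le X n : 1 <= X -> S n X X <= n%:R ^+ 2 * (Tp n).[X].
Proof.
move=> X1.
pose r k := k%:R ^+ 2 * (Tp k).[X] - S k X X.
suff: 0 <= r n <= r n.+1 by rewrite /r subr_ge0 => /andP [].
elim: n => [|n /andP [i1 i2]].
  rewrite /r S0 S1 ?T0 ?T1 !mulr0n /= expr0n /= mul0r !subr0 lexx /=.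
  rewrite expr1n mul1r; lra.
apply/andP; split; first lra.
have [t0 [t01 _]] := T_mono n X X X1 (lexx X).
have [_ [t12 _]] := T_mono n.+1 X X X1 (lexx X).
move: i1 i2 t0 t01 t12; rewrite /r S_rec TE !mulrSr.
set N := n%:R; set a := (Tp n).[X]; set b := (Tp n.+1).[X].
set s0 := S n X X; set s1 := S n.+1 X X => i1 i2 t0 t01 t12.
have N0 : 0 <= N by rewrite ler0n.
have P1 : 0 <= (X - 1) * ((N + 1) ^+ 2 * b - s1) by apply: mulr_ge0; lra.
have P2 : 0 <= (X - 1) * ((2 * N + 3) * b) by apply: mulr_ge0; [lra | apply: mulr_ge0; lra].
have P3 : 0 <= (N + 1) * (b - a) by apply: mulr_ge0; lra.
nra.
Qed.


Lemma bigmax_le_B (d : nat) (F : 'I_d -> R) (B : R) :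
  0 <= B -> (forall i, F i <= B) -> \big[Num.max/0]_(i < d) F i <= B.
Proof.
move=> B0 HF; apply: (big_ind (fun y => y <= B)) => //.
by move=> u v hu hv; rewrite ge_max hu hv.
Qed.

Lemma bigmax_ge0 (d : nat) (F : 'I_d -> R) : 0 <= \big[Num.max/0]_(i < d) F i.
Proof.
apply: (big_rec (fun y => 0 <= y)) => // i y _ hy.
by rewrite le_max hy orbT.
Qed.

End Cheb.

Theorem lemma6 (R : realType) (n : nat) (Tn : {poly R})
  (hT : forall theta : R, Tn.[cos theta] = cos (n%:R * theta))
  (delta : R) (d : nat) (lam : 'I_d -> R) :
  (1 <= n)%N -> 0 <= delta -> delta < 1 ->
  (forall i, -1 <= lam i /\ lam i <= 1 + delta) ->
  gamma2 (divdiff Tn lam) <= (2 * n%:R ^+ 2 - 1) * Tn.[1 + delta].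
Proof.
move=> n1 d0 d1 hlam.
have eqT : Tn = Tp R n.
  apply: poly_eq_on => x hx; have [_ <-] := acos_def hx.
  by rewrite hT cosT.
rewrite eqT; set X := 1 + delta.
have X1 : 1 <= X by rewrite /X; lra.
have hl : forall i, -1 <= lam i <= X.
  by move=> i; have [h1 h2] := hlam i; rewrite h1 h2.
pose uX k := (Up R (n.-1 - k)).[X].
pose tX k := (Tp R k).[X].
have uX1 : forall k, 1 <= uX k by move=> k; have [] := @U_mono R (n.-1 - k) X X X1 (lexx X).
have tX1 : forall k, 1 <= tX k by move=> k; have [] := @T_mono R k X X X1 (lexx X).
have cc0 : forall k, 0 < cc R k by move=> k; rewrite /cc; case: (k == 0%N); lra.
pose a k := Num.sqrt (cc R k * tX k / uX k).
pose b k := cc R k / a k.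
have aq : forall k, 0 < cc R k * tX k / uX k.
  move=> k; apply: divr_gt0; last by have := uX1 k; lra.
  by apply: mulr_gt0; [exact: cc0 | have := tX1 k; lra].
have a0 : forall k, 0 < a k by move=> k; rewrite sqrtr_gt0.
have a2 : forall k, a k ^+ 2 = cc R k * tX k / uX k.
  by move=> k; rewrite sqr_sqrtr // ltW.
pose v (i : 'I_d) := \row_(k < n) (a k * (Up R (n.-1 - k)).[lam i]).
pose w (j : 'I_d) := \row_(k < n) (b k * (Tp R k).[lam j]).
set c := Num.max (\big[Num.max/0]_(i < d) sqnorm (v i))
                 (\big[Num.max/0]_(j < d) sqnorm (w j)).
have cE : [set c : R | exists (k : nat) (v w : 'I_d -> 'rV[R]_k),
        (forall i j, divdiff (Tp R n) lam i j = \sum_(l < k) v i 0 l * w j 0 l) /\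
        c = Num.max (\big[Num.max/0]_(i < d) sqnorm (v i))
                    (\big[Num.max/0]_(j < d) sqnorm (w j))]%classic c.
  exists n, v, w; split => // i j.
  have -> : divdiff (Tp R n) lam i j = S R n (lam i) (lam j).
    rewrite /divdiff mxE; case: (eqVneq (lam i) (lam j)) => h.
      by rewrite /= S_deriv h.
    rewrite /= -S_diff mulrAC mulfV ?mul1r //; by rewrite subr_eq0.
  rewrite /S; apply: eq_bigr => k _; rewrite !mxE /b.
  have := a0 k; move: (a k) => ak hak; field; lra.
have g1 : gamma2 (divdiff (Tp R n) lam) <= c.
  rewrite /gamma2; apply: ge_inf => //.
  exists 0 => y [k [v' [w' [_ ->]]]].
  by rewrite le_max bigmax_ge0.
have sX0 : 0 <= S R n X X.
  rewrite /S; apply: sumr_ge0 => k _; apply: mulr_ge0; last by have := tX1 k; rewrite /tX; lra.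
  by apply: mulr_ge0; [apply: ltW | have := uX1 k; rewrite /uX; lra].
have g2 : c <= S R n X X.
  rewrite /c ge_max; apply/andP; split; apply: bigmax_le_B => // i;
    rewrite /sqnorm /S; apply: ler_sum => k _; rewrite mxE.
    have hb := @U_bound R (n.-1 - k) (lam i) X X1 (hl i).
    move: hb; rewrite ler_norml -/(uX k) => /andP [hb1 hb2].
    have u1 := uX1 k; have t1 := tX1 k.
    rewrite exprMn a2 -/(uX k) -/(tX k).
    have e : cc R k * tX k / uX k * uX k ^+ 2 = cc R k * uX k * tX k.
      by field; lra.
    rewrite -e; apply: ler_wpM2l; first by apply: ltW.
    nra.
  have hb := @T_bound R k (lam i) X X1 (hl i).
  move: hb; rewrite ler_norml -/(tX k) => /andP [hb1 hb2].
  have u1 := uX1 k; have t1 := tX1 k.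
  rewrite exprMn -/(uX k) -/(tX k).
  have e : b k ^+ 2 * tX k ^+ 2 = cc R k * uX k * tX k.
    rewrite /b expr_div_n a2; have hc := cc0 k; field; lra.
  rewrite -e; apply: ler_wpM2l; first by apply: sqr_ge0.
  nra.
have g3 := @S_le R X n X1.
have tn1 := tX1 n.
have N1 : 1 <= n%:R :> R by rewrite ler1n.
apply: (le_trans g1); apply: (le_trans g2); apply: (le_trans g3).
rewrite -/(tX n).
have hh : 0 <= (n%:R ^+ 2 - 1) * tX n.
  apply: mulr_ge0; last lra.
  rewrite subr_ge0 expr2; have := mulr_ge0 (ler0n R 1) (ler0n R 1).
  nra.
nra.
Qed.
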